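(* Let $C\subseteq GF(2)^n$ be an affine subspace such that every vector of $C$ has weight exactly $k$. Then $|C|\le 2^{(n-|n-2k|)/2}$.
   Context: The weight of $x\in GF(2)^n$ is the number of its nonzero coordinates. *)

(* Defs.v *)
From HB Require Import structures.
From mathcomp Require Import all_boot all_order all_algebra.
Set Implicit Arguments. Unset Strict Implicit. Unset Printing Implicit Defensive.
Import GRing.Theory.
Local Open Scope ring_scope.

Definition weight (n : nat) (x : 'rV['F_2]_n) : nat := #|[set i | x 0 i != 0]|.

Definition affine_subspace (n : nat) (C : {set 'rV['F_2]_n}) : Prop :=
  exists (a : 'rV['F_2]_n) (V : {vspace 'rV['F_2]_n}),
    C = [set x | x - a \in V].

(* Main.v *)
Require Import Defs.
From mathcomp Require Import all_boot all_order all_algebra.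
From mathcomp Require Import zify.
Import GRing.Theory.
Local Open Scope ring_scope.

Lemma F2_cases (x : 'F_2) : x = 0 \/ x = 1.
Proof. by case: x => [[|[|m]]] // H; [left|right]; apply/val_inj. Qed.

Lemma card_restrict (n : nat) (S : {set 'I_n}) (C : {set 'rV['F_2]_n}) :
  {in C &, forall x y : 'rV['F_2]_n, (forall i, i \in S -> x 0 i = y 0 i) -> x = y} ->
  (#|C| <= 2 ^ #|S|)%N.
Proof.
move=> inj.
pose f (x : 'rV['F_2]_n) := [ffun j : 'I_#|S| => x 0 (enum_val j)].
rewrite -(card_in_imset (f := f)); last first.
  move=> x y xC yC /= fxy; apply: inj => // i iS.
  move/ffunP: fxy => /(_ (enum_rank_in iS i)).
  by rewrite !ffunE enum_rankK_in.
apply: leq_trans (max_card _) _.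
rewrite card_ffun card_ord.
by rewrite card_ord.
Qed.

Local Close Scope ring_scope.

Theorem corollary5 (n k : nat) (C : {set 'rV['F_2]_n}) :
  affine_subspace C ->
  (forall x, x \in C -> weight x = k) ->
  #|C| <= 2 ^ ((n - `|n - k.*2|) %/ 2).
Proof.
Local Open Scope ring_scope.
case=> a [V ->] Hw.
set C' := [set x | x - a \in V] in Hw *.
have aC : a \in C' by rewrite inE subrr mem0v.
pose S := [set i | a 0 i != 0].
have HS : #|S| = k by rewrite -(Hw a aC).
pose supp (v : 'rV['F_2]_n) := [set i | v 0 i != 0].
have zC : forall x y, x \in C' -> y \in C' -> (a + (x - y)) \in C'.
  move=> x y; rewrite !inE => xV yV.
  have -> : (a + (x - y) - a = (x - a) - (y - a)).
    by rewrite addrC addrA addNr add0r opprB addrA subrK.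
  exact: memvB.
have v0 : forall v : 'rV['F_2]_n, #|supp v| = 0%N -> v = 0.
  move=> v /eqP; rewrite cards_eq0 => /eqP e; apply/rowP => j; rewrite !mxE.
  have : j \notin supp v by rewrite e inE.
  by rewrite inE negbK => /eqP.
have kn : (k <= n)%N by rewrite -HS -[n in (_ <= n)%N]card_ord max_card.
have vC : forall x y, x \in C' -> y \in C' -> weight (a + (x - y)) = k.
  by move=> x y xC yC; apply: Hw; apply: zC.
have B1 : (#|C'| <= 2 ^ k)%N.
  rewrite -HS; apply: card_restrict => x y xC yC agree.
  apply/eqP; rewrite -subr_eq0; apply/eqP; apply: v0.
  have Hz := vC x y xC yC; rewrite /weight in Hz.
  set v := x - y in Hz *.
  have dis : [disjoint S & supp v].
    apply/pred0P => j /=; apply/negbTE/negP => /andP [Hj].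
    by rewrite inE /v !mxE agree // subrr eqxx.
  have sub : S :|: supp v \subset [set i | (a + v) 0 i != 0].
    apply/subsetP => j; rewrite !inE !mxE.
    case/orP => Hi.
      by rewrite agree ?inE // subrr addr0.
    case: (boolP (a 0 j == 0)) => [/eqP -> | Ha]; first by rewrite add0r.
    move: Hi; rewrite agree ?inE // subrr eqxx //.
  have := subset_leq_card sub; rewrite Hz cardsU.
  have -> : S :&: supp v = set0.
    by apply/eqP; rewrite setI_eq0.
  rewrite cards0 HS; lia.
have B2 : (#|C'| <= 2 ^ (n - k))%N.
  have HSc : #|~: S| = (n - k)%N by have := cardsC S; rewrite card_ord HS; lia.
  rewrite -HSc; apply: card_restrict => x y xC yC agree.
  apply/eqP; rewrite -subr_eq0; apply/eqP; apply: v0.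
  have Hz := vC x y xC yC; rewrite /weight in Hz.
  set v := x - y in Hz *.
  have vS : supp v \subset S.
    apply/subsetP => j; rewrite !inE /v !mxE.
    case: (a 0 j =P 0) => // Ha.
    by rewrite agree ?inE ?Ha ?eqxx // subrr eqxx.
  have sub : [set i | (a + v) 0 i != 0] \subset S :\: supp v.
    apply/subsetP => j; rewrite !inE !mxE.
    case: (boolP (a 0 j == 0)) => [/eqP Ha | Ha].
      rewrite Ha add0r => Hv; move/subsetP: vS => /(_ j).
      have Hv' : j \in supp v by rewrite inE /v !mxE.
      by move=> /(_ Hv'); rewrite inE Ha eqxx.
    case/F2_cases: (a 0 j) Ha => -> // _.
    by case/F2_cases: (x 0 j - y 0 j) => ->.
  have := subset_leq_card sub; rewrite Hz cardsD.
  have -> : S :&: supp v = supp v by apply/setIidPr.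
  have := subset_leq_card vS.
  rewrite HS; lia.
have -> : ((n - `|n - k.*2|) %/ 2 = minn k (n - k))%N by lia.
case: (leqP k (n - k)) => h.
  by [].
by [].
Qed.
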